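(* Let $f_{r,k}(x)=x^2\exp(r-x)+k$ and $c=2$. For any $0\leq k<2$ there exists $r^*=r^*(k)$ such that for all $r\geq r^*(k)$, \[ f_{r,k}^2(c)<c<f_{r,k}(c). \] Moreover, for $0<k<2$ the value $r^*(k)$ can be chosen such that, in addition, for all $r\geq r^*(k)$ the interval $[f_{r,k}^2(c),f_{r,k}(c)]$ contains exactly one fixed point of $f_{r,k}$.
   Context: $c=2$ is the unique critical point of $f_{r,k}$ on $(0,\infty)$ (the point of maximum of $f_{r,k}$ on $[0,\infty)$). *)

(* Defs.v *)
From Stdlib Require Import Reals.
Open Scope R_scope.

Definition frk (r k x : R) : R := x ^ 2 * exp (r - x) + k.

(* the critical point c = 2 *)
Definition c : R := 2.

(* Main.v *)
Require Import Defs.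
From Stdlib Require Import Reals.
From Stdlib Require Import Lra Psatz.
Open Scope R_scope.

Lemma exp_ge1 : forall x, 1 + x <= exp x.
Proof.
  intro x. destruct (Req_dec x 0) as [->|H].
  - rewrite exp_0. lra.
  - left. now apply exp_ineq1.
Qed.

Lemma exp2_le9 : exp 2 <= 9.
Proof.
  replace 2 with (1+1) by lra. rewrite exp_plus.
  pose proof exp_le_3. pose proof (exp_pos 1). nra.
Qed.

Lemma exp_big : forall A, 0 < A -> (A/5)^5 <= exp A.
Proof.
  intros A HA.
  replace A with (A/5+A/5+A/5+A/5+A/5) at 2 by field.
  rewrite !exp_plus.
  pose proof (exp_ge1 (A/5)).
  assert (0 <= A/5) by lra.
  set (e := exp (A/5)) in *.
  assert (A/5 <= e) by lra.
  assert (0 <= A/5*(A/5)) by nra.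
  assert (A/5*(A/5) <= e*e) by nra.
  assert (A/5*(A/5)*(A/5) <= e*e*e) by nra.
  assert (0 <= A/5*(A/5)*(A/5)) by nra.
  assert (A/5*(A/5)*(A/5)*(A/5) <= e*e*e*e) by nra.
  assert (0 <= A/5*(A/5)*(A/5)*(A/5)) by nra.
  assert (A/5*(A/5)*(A/5)*(A/5)*(A/5) <= e*e*e*e*e) by nra.
  simpl. lra.
Qed.

Lemma mono_dec : forall r x y, 2 <= x <= y ->
  y^2 * exp (r - y) <= x^2 * exp (r - x).
Proof.
  intros r x y [Hx Hxy].
  set (s := y - x).
  assert (Hs : 0 <= s) by (unfold s; lra).
  replace (r - x) with ((r - y) + s) by (unfold s; lra).
  rewrite exp_plus.
  pose proof (exp_pos (r - y)).
  assert (HE : y^2 <= x^2 * exp s).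
  { assert (exp (s/x + s/x) <= exp s).
    { assert (s/x <= s/2).
      { apply Rmult_le_compat_l with (r := s) (r1 := /x) (r2 := /2) in Hs.
        - unfold Rdiv. lra.
        - apply Rinv_le_contravar; lra. }
      destruct (Req_dec (s/x+s/x) s) as [He|Hn].
      - rewrite He. lra.
      - left. apply exp_increasing. lra. }
    rewrite exp_plus in H0.
    pose proof (exp_ge1 (s/x)).
    assert (0 <= s/x) by (unfold Rdiv; apply Rmult_le_pos; [lra| left; apply Rinv_0_lt_compat; lra]).
    assert ((1 + s/x)*(1+s/x) <= exp s) by nra.
    assert (x * (1 + s/x) = y) by (unfold s; field; lra).
    assert (x^2 * ((1 + s/x)*(1+s/x)) = y^2) by (rewrite <- H4; ring).
    assert (0 <= x^2) by nra. nra. }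
  nra.
Qed.

Lemma part1 (k r M : R) : 0 <= k < 2 -> M >= 1000/(2-k) -> exp (r-2) >= M ->
  frk r k (frk r k c) < c < frk r k c.
Proof.
  intros Hk HM Hu.
  unfold c.
  set (u := exp (r-2)) in *.
  set (A := 2^2*u + k).
  set (d := 2 - k).
  assert (Hd : 0 < d) by (unfold d; lra).
  assert (HMd : M * d >= 1000).
  { unfold d in *. apply Rge_le in HM. apply Rle_ge.
    apply Rmult_le_compat_r with (r := 2-k) in HM; [|lra].
    replace (1000/(2-k)*(2-k)) with 1000 in HM by (field; lra). lra. }
  assert (Hd2 : d <= 2) by (unfold d; lra).
  assert (HM0 : M > 0).
  { destruct (Rle_lt_dec M 0); [|lra]. assert (M*d <= 0) by nra. lra. }
  assert (HM5 : M >= 500) by nra.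
  assert (HA : A >= 4*u) by (unfold A; lra).
  assert (HfA : frk r k 2 = A) by (unfold frk, A, u; ring). rewrite HfA.
  split; [| lra].
  unfold frk.
  assert (Hre : exp (r - A) * exp A = u * exp 2).
  { unfold u. rewrite <- !exp_plus. f_equal. ring. }
  pose proof (exp_big A ltac:(lra)) as HB.
  pose proof exp2_le9 as H9.
  pose proof (exp_pos 2).
  pose proof (exp_pos A).
  pose proof (exp_pos (r - A)).
  set (B := exp A) in *. set (E := exp (r - A)) in *. set (e2 := exp 2) in *.
  assert (HdA : d * A^2 >= 16000 * 500).
  { assert (A^2 >= 16 * u * u) by nra. nra. }
  assert (A^2 * E * B < d * B).
  { replace (A^2*E*B) with (A^2 * (E*B)) by ring. rewrite Hre.
    assert (A^2*(u*e2) <= A^2 * (A/4) * 9).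
    { assert (0 <= u) by lra. assert (u*e2 <= A/4*9) by nra. nra. }
    assert (d * (A/5)^5 <= d * B) by nra.
    assert (A^2*(A/4)*9 < d*(A/5)^5).
    { simpl. assert (A^3 > 0) by (simpl; nra).
      assert (9/4 < d*A^2/3125) by lra.
      replace (d * (A / 5 * (A / 5 * (A / 5 * (A / 5 * (A / 5 * 1))))))
        with (A^3 * (d*A^2/3125)) by (simpl; field).
      replace (A*(A*1)*(A/4)*9) with (A^3*(9/4)) by (simpl; field).
      nra. }
    lra. }
  assert (A^2*E < d) by nra.
  unfold d in *. lra.
Qed.

Lemma frk_cont : forall r k, continuity (fun x => x - frk r k x).
Proof.
  intros r k. unfold frk.
  apply continuity_minus; [apply derivable_continuous; apply derivable_id|].
  apply continuity_plus; [|apply continuity_const; intros ??; reflexivity].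
  apply continuity_mult.
  - apply derivable_continuous. apply derivable_pow.
  - apply continuity_comp with (f1 := fun x => r - x); [|intros x; apply derivable_continuous_pt; apply derivable_pt_exp].
    apply continuity_minus; [apply continuity_const; intros ??; reflexivity|].
    apply derivable_continuous; apply derivable_id.
Qed.

Lemma exp_ge_of (r M : R) : 0 < M -> r >= 2 + ln M -> exp (r - 2) >= M.
Proof.
  intros HM Hr. rewrite <- (exp_ln M HM) at 1.
  destruct (Req_dec (r-2) (ln M)) as [->|Hn]; [lra|].
  left. apply exp_increasing. lra.
Qed.

Lemma part2 (k r M : R) : 0 < k < 2 -> M >= 1000/(2-k) -> M >= 3/(k*k) ->
  exp (r-2) >= M ->
  exists! p : R, frk r k (frk r k c) <= p <= frk r k c /\ frk r k p = p.
Proof.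
  intros Hk HM HM' Hu.
  destruct (part1 k r M ltac:(lra) HM Hu) as [H1 H2].
  unfold c in *.
  set (A := frk r k 2) in *.
  set (F := frk r k A) in *.
  assert (HFk : k < F).
  { unfold F, frk. assert (0 < A) by lra. pose proof (exp_pos (r - A)). pose proof (pow_lt A 2 H). nra. }
  set (u := exp (r-2)) in *.
  assert (Hku : k*k*u > 2).
  { assert (0 < k*k) by nra.
    assert (k*k*M >= 3).
    { apply Rge_le in HM'. apply Rle_ge.
      apply Rmult_le_compat_l with (r := k*k) in HM'; [|lra].
      replace (k*k*(3/(k*k))) with 3 in HM' by (field; lra). lra. }
    nra. }
  assert (Hsmall : forall p, F <= p < 2 -> frk r k p <> p).
  { intros p [Hp1 Hp2] Heq.
    assert (exp (r - 2) <= exp (r - p)).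
    { left. apply exp_increasing. lra. }
    fold u in H.
    assert (k*k <= p^2) by (simpl; nra).
    assert (k*k*u <= p^2 * exp (r-p)).
    { apply Rmult_le_compat; try nra. }
    unfold frk in Heq. lra. }
  destruct (IVT (fun x => x - frk r k x) 2 A (frk_cont r k) H2
     ltac:(cbv beta; fold A; lra) ltac:(cbv beta; fold F; lra)) as [z [Hz1 Hz2]].
  exists z. split.
  - split; [lra|]. lra.
  - intros p [[Hp1 Hp2] Hp3].
    destruct (Rlt_le_dec p 2) as [Hlt|Hge].
    + exfalso. exact (Hsmall p (conj Hp1 Hlt) Hp3).
    + destruct (Rle_lt_dec z p) as [Hzp|Hzp].
      * pose proof (mono_dec r z p (conj (proj1 Hz1) Hzp)).
        cbv beta in Hz2; unfold frk in Hp3, Hz2. lra.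
      * pose proof (mono_dec r p z (conj Hge (Rlt_le _ _ Hzp))).
        cbv beta in Hz2; unfold frk in Hp3, Hz2. lra.
Qed.

Theorem lemma3p1 :
  forall k : R, 0 <= k < 2 ->
  exists rstar : R,
    (forall r : R, r >= rstar ->
       frk r k (frk r k c) < c < frk r k c) /\
    (0 < k -> forall r : R, r >= rstar ->
       exists! p : R, frk r k (frk r k c) <= p <= frk r k c /\ frk r k p = p).
Proof.
  intros k Hk.
  assert (H1 : 0 < 1000/(2-k)) by (apply Rdiv_lt_0_compat; lra).
  destruct (Rlt_le_dec 0 k) as [Hk0|Hk0].
  - assert (H2 : 0 < 3/(k*k)) by (apply Rdiv_lt_0_compat; nra).
    set (M := 1000/(2-k) + 3/(k*k)).
    exists (2 + ln M). split.
    + intros r Hr. apply (part1 k r M Hk); [unfold M; lra|].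
      apply exp_ge_of; [unfold M; lra|exact Hr].
    + intros _ r Hr. apply (part2 k r M); [lra|unfold M; lra|unfold M; lra|].
      apply exp_ge_of; [unfold M; lra|exact Hr].
  - set (M := 1000/(2-k)).
    exists (2 + ln M). split.
    + intros r Hr. apply (part1 k r M Hk); [unfold M; lra|].
      apply exp_ge_of; [unfold M; lra|exact Hr].
    + intros Hk1. lra.
Qed.
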